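(* Let $T$ be a tournament and $X=(v_1,\dots,v_k)$, $k\ge2$, a list of vertices satisfying the $U$-property. Then $v_k$ has exactly one in-neighbour $w$ in $V(T)\setminus X$; let $X'=(v_1,\dots,v_k,w)$. (i) If $d^-(w)=d^-(v_k)$, then $T[X']$ is a $U$-tournament and $X'$ dominates $T$. (ii) If $d^-(w)=d^-(v_k)+1$, then $X'$ is contained in a set $Y\subseteq V(T)$ such that $T[Y]$ is a $U$-tournament and $Y$ dominates or quasi-dominates $T$. (iii) If $d^-(w)>d^-(v_k)+1$, then $T[X]$ is a $U$-tournament and $X$ $(w,v_k)$-quasi-dominates $T$. In every case, $X$ is contained in a set $Y$ such that $T[Y]$ is a $U$-tournament and $Y$ dominates or quasi-dominates $T$.
   Context: A tournament is a digraph with exactly one arc between each pair of distinct vertices; $d^-(v)$ is the in-degree of $v$ in $T$. A list $(v_1,\dots,v_k)$, $k\ge2$, satisfies the $U$-property if $d^-(v_1)=1$ and for each $i\in\{2,\dots,k\}$, $(v_i,v_{i-1})\in A(T)$ and $d^-(v_i)=i-1$. $U_m$ is the tournament on $\{x_1,\dots,x_m\}$ with arcs $(x_{i+1},x_i)$ for $i\in[m-1]$ and $(x_i,x_j)$ for $1\le i<m$, $i+1<j\le m$; a $U$-tournament is a tournament isomorphic to some $U_m$. A set $Y$ dominates $T$ if $(y,z)\in A(T)$ for all $y\in Y$, $z\in V(T)\setminus Y$. $Y$ $(b,a)$-quasi-dominates $T$ if: $(b,a)\in A(T)$ with $a\in Y$, $b\notin Y$; $(u,v)\in A(T)$ for every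 $(u,v)\in (Y\times(V(T)\setminus Y))\setminus\{(a,b)\}$; $d^-(b)\ge|Y|+1$; and $a$ has an out-neighbour in $Y$. $Y$ quasi-dominates $T$ if it $(b,a)$-quasi-dominates $T$ for some $a,b$. *)

(* Defs.v *)
From mathcomp Require Import all_boot.
Set Implicit Arguments. Unset Strict Implicit. Unset Printing Implicit Defensive.

Definition tournament (V : finType) (E : rel V) : Prop :=
  (forall x, ~~ E x x) /\ (forall x y, x != y -> E x y = ~~ E y x).

Definition indeg (V : finType) (E : rel V) (v : V) : nat := #|[set u | E u v]|.

(* U-property of the list (v_1, ..., v_k) = v1 :: vs (0-based index j <-> v_{j+1}) *)
Definition Uprop (V : finType) (E : rel V) (v1 : V) (vs : seq V) : Prop :=
  let X := v1 :: vs in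
  2 <= size X /\
  indeg E v1 = 1 /\
  (forall j, 1 <= j < size X ->
     E (nth v1 X j) (nth v1 X j.-1) /\ indeg E (nth v1 X j) = j).

(* T[Y] is a U-tournament: T[Y] is isomorphic to U_m (m = |Y|), i.e. Y can be
   enumerated as x_1,...,x_m (0-based here) so that for distinct i,j the arc
   (x_i,x_j) is present iff i = j+1 or i+1 < j. *)
Definition isUtour (V : finType) (E : rel V) (Y : {set V}) : Prop :=
  exists s : seq V, exists x0 : V,
    uniq s /\ [set x in s] = Y /\
    (forall i j, i < size s -> j < size s ->
       E (nth x0 s i) (nth x0 s j) = (i == j.+1) || (i.+1 < j)).

Definition dominates (V : finType) (E : rel V) (Y : {set V}) : Prop :=
  forall y z, y \in Y -> z \notin Y -> E y z.

Definition quasi_dom_ba (V : finType) (E : rel V) (Y : {set V}) (b a : V) : Prop :=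
  E b a /\ a \in Y /\ b \notin Y /\
  (forall u v, u \in Y -> v \notin Y -> (u, v) != (a, b) -> E u v) /\
  #|Y| + 1 <= indeg E b /\
  (exists c, c \in Y /\ E a c).

Definition quasi_dom (V : finType) (E : rel V) (Y : {set V}) : Prop :=
  exists b a, quasi_dom_ba E Y b a.

(* Main.v *)
Require Import Defs.
From mathcomp Require Import all_boot zify.
Set Implicit Arguments. Unset Strict Implicit. Unset Printing Implicit Defensive.

Section Core.
Variables (V : finType) (E : rel V) (hT : tournament E).

Lemma Tloop a : ~~ E a a. Proof. exact: hT.1. Qed.
Lemma Tneq a b : E a b -> a != b.
Proof. by move=> h; apply/eqP => eab; subst; move: h; rewrite (negbTE (Tloop b)). Qed.
Lemma Tasym a b : E a b -> ~~ E b a.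
Proof. by move=> h; move: (h); rewrite (hT.2 _ _ (Tneq h)). Qed.
Lemma Tflip a b : a != b -> ~~ E b a -> E a b.
Proof. by move=> ne h; rewrite (hT.2 _ _ ne). Qed.

Variables (v1 : V) (vs : seq V) (hU : Uprop E v1 vs).

Definition x i := nth v1 (v1 :: vs) i.
Local Notation X := (v1 :: vs).
Local Notation n := (size vs).

Lemma hn : 1 <= n. Proof. by have := hU.1. Qed.

Lemma arcx i : 1 <= i <= n -> E (x i) (x i.-1).
Proof. by move=> h; exact: (hU.2.2 i h).1. Qed.

Lemma indeg_x i : i <= n -> indeg E (x i) = i.-1.+1.
Proof.
case: i => [|i] h; first exact: hU.2.1.
exact: (hU.2.2 i.+1 h).2.
Qed.

Lemma uniqX : uniq X.
Proof.
apply/(uniqP v1) => i j; rewrite !inE /= !ltnS => hi hj eij.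
wlog lij : i j hi hj eij / i <= j.
  move=> W; case: (leqP i j) => h; first exact: W.
  by apply/esym/W => //; apply: ltnW.
have [l|->//] : i < j \/ i = j by lia.
case: i l hi eij lij => [|i] l hi eij _.
  case: j l hj eij => [//|[|j]] l hj eij.
    by have := arcx (i:=1) hn; move/Tneq/eqP; case; rewrite /x -eij.
  have := indeg_x hj; have := indeg_x (leq0n n).
  by rewrite /x -eij => -> e; lia.
have := indeg_x hj; have := indeg_x hi.
by rewrite /x -eij => -> e; lia.
Qed.

Lemma x_inj i j : i <= n -> j <= n -> (x i == x j) = (i == j).
Proof. by move=> hi hj; rewrite /x nth_uniq // uniqX. Qed.

Lemma x_take i m : i <= n -> (x i \in take m X) = (i < m).
Proof.
move=> hi; rewrite in_take; last by apply: mem_nth.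
by rewrite /x index_uniq // uniqX.
Qed.

Lemma x_mem i : i <= n -> x i \in X.
Proof. by move=> hi; apply: mem_nth. Qed.

Lemma memX u : u \in X -> exists2 i, i <= n & u = x i.
Proof.
move=> hu; exists (index u X); first by have := index_mem u X; rewrite hu.
by rewrite /x nth_index.
Qed.

Lemma take_memX u m : u \in take m X -> exists2 i, i < m & (i <= n /\ u = x i).
Proof.
move=> hu; have [i hi eu] := memX (mem_take hu); subst u.
by exists i => //; rewrite -(x_take _ hi).
Qed.

Lemma card_take m : m <= n.+1 -> #|[set u in take m X]| = m.
Proof.
move=> hm; rewrite cardsE; move/card_uniqP: (take_uniq m uniqX) => ->.
by rewrite size_takel.
Qed.

Lemma Nset v : indeg E v = #|[set u | E u v]|. Proof. by []. Qed.

Lemma inner i : i < n -> forall u, E u (x i) = (u == x i.+1) || (u \in take i.-1 X).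
Proof.
elim/ltn_ind: i => i IH hi u.
set S := x i.+1 |: [set u in take i.-1 X].
have sub : S \subset [set u | E u (x i)].
  apply/subsetP => y; rewrite !inE => /orP [/eqP -> | hy].
    by have := arcx (i := i.+1) (hi : 1 <= i.+1 <= n).
  have [l hl [hln ->]] := take_memX hy.
  have hE := IH l (ltac:(lia)) (ltac:(lia)) (x i).
  rewrite x_inj ?x_take in hE; try lia.
  have F : ((i == l.+1) || (i < l.-1)) = false by lia.
  rewrite F in hE.
  apply: Tflip; first by rewrite x_inj; lia.
  by rewrite hE.
have cS : #|S| = i.-1.+1.
  rewrite cardsU1 card_take; last by lia.
  rewrite inE x_take; last lia.
  have -> : (i.+1 < i.-1) = false by lia.
  by [].
have eS : S = [set u | E u (x i)].
  apply/eqP; rewrite eqEcard sub /= cS -Nset indeg_x //; lia.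
by have := congr1 (fun A : {set V} => u \in A) eS; rewrite /S !inE => <-.
Qed.

Lemma last_inner : exists w,
  [set u | E u (x n)] = w |: [set u in take n.-1 X] /\ w \notin X.
Proof.
have hn := hn.
set S := [set u in take n.-1 X].
have sub : S \subset [set u | E u (x n)].
  apply/subsetP => y; rewrite !inE => hy.
  have [l hl [hln ->]] := take_memX hy.
  have hE := inner (i := l) (ltac:(lia)) (x n).
  rewrite x_inj ?x_take in hE; try lia.
  have F : ((n == l.+1) || (n < l.-1)) = false by lia.
  rewrite F in hE.
  apply: Tflip; first by rewrite x_inj; lia.
  by rewrite hE.
have cS : #|S| = n.-1 by rewrite card_take; lia.
have : ~~ ([set u | E u (x n)] \subset S).
  apply/negP => /subset_leq_card; rewrite -Nset indeg_x // cS; lia.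
case/subsetPn => w; rewrite inE => hw hwS.
exists w; split.
  apply/esym/eqP; rewrite eqEcard subUset sub1set inE hw sub /=.
  by rewrite cardsU1 hwS cS -Nset indeg_x //; lia.
apply/negP => /memX [l hl ew]; subst w.
move: hwS; rewrite inE x_take // => hl2.
have [el|el] : l = n \/ l = n.-1 by lia.
  by subst l; move: hw; rewrite (negbTE (Tloop _)).
subst l; have := arcx (i := n) (ltac:(lia)).
by move/Tasym; rewrite hw.
Qed.

Lemma char_last w : w \notin X -> E w (x n) ->
  forall u, E u (x n) = (u == w) || (u \in take n.-1 X).
Proof.
move=> hwX hw u.
have [w0 [eN _]] := last_inner.
have ew : w = w0.
  have : w \in [set u | E u (x n)] by rewrite inE.
  rewrite eN !inE => /orP [/eqP //|/mem_take]; by rewrite (negbTE hwX).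
subst w0.
by have := congr1 (fun A : {set V} => u \in A) eN; rewrite !inE => <-.
Qed.

Lemma y_lt w i : i <= n -> nth v1 (rcons X w) i = x i.
Proof. by move=> hi; rewrite nth_rcons /= ltnS hi. Qed.
Lemma y_last w : nth v1 (rcons X w) n.+1 = w.
Proof. by rewrite nth_rcons /= ltnn eqxx. Qed.

Lemma relX' w : w \notin X -> E w (x n) ->
  forall i j, i <= n.+1 -> j <= n.+1 ->
  E (nth v1 (rcons X w) i) (nth v1 (rcons X w) j) = (i == j.+1) || (i.+1 < j).
Proof.
move=> hwX hw i j hi hj.
have hn := hn.
have wx : forall l, l <= n -> (w == x l) = false.
  move=> l hl; apply/negP => /eqP e; move: hwX; rewrite e x_mem //.
have wt : forall m, (w \in take m X) = false.
  by move=> m; apply/negP => /mem_take; rewrite (negbTE hwX).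
have [hjn|hjn] : j <= n \/ j = n.+1 by lia.
  rewrite (y_lt w hjn).
  have [hjn'|hjn'] : j < n \/ j = n by lia.
    rewrite inner //.
    have [hin|hin] : i <= n \/ i = n.+1 by lia.
      rewrite y_lt // x_inj ?x_take //; lia.
    subst i; rewrite y_last wx // wt; lia.
  subst j; rewrite (char_last hwX hw).
  have [hin|hin] : i <= n \/ i = n.+1 by lia.
    rewrite y_lt // eq_sym wx // x_take //; lia.
  subst i; rewrite y_last eqxx; lia.
subst j; rewrite y_last.
have [hin|hin] : i <= n \/ i = n.+1 by lia.
  rewrite y_lt //.
  have [hin'|hin'] : i < n \/ i = n by lia.
    have -> : (i == n.+2) || (i.+1 < n.+1) = true by lia.
    apply: Tflip; first by rewrite eq_sym wx.
    by rewrite inner // wx // wt.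
  subst i; rewrite (negbTE (Tasym hw)); lia.
subst i; rewrite y_last (negbTE (Tloop _)); lia.
Qed.

Lemma domX w : w \notin X -> E w (x n) ->
  forall u v, u \in X -> v \notin X -> (u != x n) || (v != w) -> E u v.
Proof.
move=> hwX hw u v /memX [i hi ->] hv hne.
have vx : v != x i by apply/eqP => e; move: hv; rewrite e x_mem.
have vt : forall m, (v \in take m X) = false.
  by move=> m; apply/negP => /mem_take; rewrite (negbTE hv).
apply: Tflip; first by rewrite eq_sym.
have [hin|hin] : i < n \/ i = n by lia.
  rewrite inner // vt orbF; apply/eqP => e; move: hv; rewrite e x_mem //.
subst i; rewrite (char_last hwX hw) vt orbF.
by move: hne; rewrite eqxx.
Qed.


Lemma vkE : last v1 vs = x n.
Proof. exact: (esym (nth_last v1 (v1 :: vs))). Qed.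

Lemma indeg_vk : indeg E (x n) = n.
Proof. have := hn; rewrite indeg_x //; lia. Qed.

Lemma some_w : exists w, w \notin X /\ E w (x n).
Proof.
have [w [eN hw]] := last_inner; exists w; split => //.
have : w \in [set u | E u (x n)] by rewrite eN !inE eqxx.
by rewrite inE.
Qed.

Lemma utourX : isUtour E [set y in X].
Proof.
have [w [hwX hw]] := some_w.
exists X, v1; split; first exact: uniqX.
split => // i j hi hj.
rewrite -[nth v1 X i]/(x i) -[nth v1 X j]/(x j) -(y_lt w (i := i)) // -(y_lt w (i := j)) //.
by rewrite relX' //; apply: ltnW.
Qed.

Lemma utourX' w : w \notin X -> E w (x n) -> isUtour E [set y in rcons X w].
Proof.
move=> hwX hw.
exists (rcons X w), v1; split; first by rewrite rcons_uniq hwX uniqX.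
split => // i j; rewrite size_rcons /= !ltnS => hi hj.
exact: relX'.
Qed.

Lemma Nw_sub w : w \notin X -> E w (x n) ->
  [set u in take n X] \subset [set u | E u w].
Proof.
move=> hwX hw; apply/subsetP => u /[!inE] /take_memX [l hl [hln ->]].
have := relX' hwX hw (i := l) (j := n.+1) (ltac:(lia)) (ltac:(lia)).
rewrite y_lt // y_last => ->; lia.
Qed.

Lemma indeg_w w : w \notin X -> E w (x n) -> n <= indeg E w.
Proof.
move=> hwX hw; rewrite Nset; have := subset_leq_card (Nw_sub hwX hw).
by rewrite card_take.
Qed.

Lemma caseI w : w \notin X -> E w (x n) -> indeg E w = n ->
  dominates E [set y in rcons X w].
Proof.
move=> hwX hw hd.
have eN : [set u in take n X] = [set u | E u w].
  apply/eqP; rewrite eqEcard Nw_sub //= -Nset hd card_take //.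
move=> y z; rewrite !in_set => hy hz.
have {}hy : y \in w :: X by rewrite -mem_rcons.
have {}hz : z \notin w :: X by rewrite -mem_rcons.
have hzw : z != w by apply: contra hz => /eqP ->; rewrite mem_head.
have hzX : z \notin X by apply: contra hz => h; rewrite in_cons h orbT.
move: hy; rewrite in_cons => /orP [/eqP ->|hy].
  apply: Tflip; first by rewrite eq_sym.
  have := congr1 (fun A : {set V} => z \in A) eN; rewrite !inE => <-.
  by apply/negP => /mem_take; rewrite (negbTE hzX).
by apply: (domX hwX hw) => //; rewrite hzw orbT.
Qed.

Lemma caseIII w : w \notin X -> E w (x n) -> n.+1 < indeg E w ->
  quasi_dom_ba E [set y in X] w (x n).
Proof.
move=> hwX hw hd.
have hn := hn.
split => //; split; first by rewrite inE x_mem.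
split; first by rewrite inE.
split.
  move=> u v; rewrite !inE => hu hv hne; apply: (domX hwX hw) => //.
  by move: hne; rewrite xpair_eqE negb_and.
split.
  rewrite cardsE; move/card_uniqP: uniqX => -> /=; lia.
exists (x n.-1); split; first by rewrite inE x_mem //; lia.
by have := arcx (i := n) (ltac:(lia)).
Qed.

Lemma uprop_ext w : w \notin X -> E w (x n) -> indeg E w = n.+1 ->
  Uprop E v1 (rcons vs w).
Proof.
move=> hwX hw hd.
have hn := hn.
split; first by rewrite /= size_rcons.
split; first exact: hU.2.1.
move=> j; rewrite -rcons_cons size_rcons => hj.
have hj' : 1 <= j <= n.+1 by move: hj => /=; lia.
have [hjn|hjn] : j <= n \/ j = n.+1 by lia.
  rewrite !y_lt //; last by lia.
  by apply: (hU.2.2 j); rewrite /=; lia.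
subst j; rewrite y_last y_lt //.
Qed.

End Core.

Lemma final (V : finType) (E : rel V) (hT : tournament E) :
  forall m (v1 : V) vs, #|V| - size (v1 :: vs) < m -> Uprop E v1 vs ->
  exists Y : {set V}, [set y in v1 :: vs] \subset Y /\ isUtour E Y /\
    (dominates E Y \/ quasi_dom E Y).
Proof.
elim=> [//|m IH] v1 vs hm hU.
have [w [hwX hw]] := some_w hT hU.
have hd := indeg_w hT hU hwX hw.
have sub' : [set y in v1 :: vs] \subset [set y in rcons (v1 :: vs) w].
  by apply/subsetP => y; rewrite !in_set mem_rcons in_cons => ->; rewrite orbT.
have [e|[e|e]] : indeg E w = size vs \/ indeg E w = (size vs).+1 \/
                 (size vs).+1 < indeg E w by lia.
- exists [set y in rcons (v1 :: vs) w]; split => //.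
  split; first exact: utourX'.
  by left; apply: caseI.
- have hU' := uprop_ext hU hwX hw e.
  have hsz : size (rcons (v1 :: vs) w) <= #|V|.
    have : uniq (rcons (v1 :: vs) w) by rewrite rcons_uniq hwX (uniqX hT hU).
    by move/card_uniqP => <-; apply: max_card.
  rewrite size_rcons /= in hsz; rewrite /= in hm.
  have [Y [hs hY]] := IH v1 (rcons vs w) (ltac:(rewrite /= size_rcons; lia)) hU'.
  exists Y; split => //; exact: subset_trans sub' hs.
- exists [set y in v1 :: vs]; split => //; split; first exact: utourX.
  by right; exists w, (x v1 vs (size vs)); apply: caseIII.
Qed.

Unset Implicit Arguments.
Theorem mainTheorem18 (V : finType) (E : rel V) (hT : tournament E)
    (v1 : V) (vs : seq V) (hU : Uprop E v1 vs) :
  let X := v1 :: vs in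
  let vk := last v1 vs in
  (exists w, w \notin X /\ E w vk /\
     (forall w', w' \notin X -> E w' vk -> w' = w)) /\
  (forall w, w \notin X -> E w vk ->
     let X' := rcons X w in
     (indeg E w = indeg E vk ->
        isUtour E [set x in X'] /\ dominates E [set x in X']) /\
     (indeg E w = (indeg E vk).+1 ->
        exists Y : {set V}, [set x in X'] \subset Y /\ isUtour E Y /\
          (dominates E Y \/ quasi_dom E Y)) /\
     ((indeg E vk).+1 < indeg E w ->
        isUtour E [set x in X] /\ quasi_dom_ba E [set x in X] w vk)) /\
  (exists Y : {set V}, [set x in X] \subset Y /\ isUtour E Y /\
     (dominates E Y \/ quasi_dom E Y)).
Proof.
cbv zeta; rewrite vkE (indeg_vk hU).
split.
  have [w [hwX hw]] := some_w hT hU; exists w; split => //; split => // w' h1 h2.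
  have := char_last hT hU hwX hw w'; rewrite h2 => /esym/orP [/eqP //|/mem_take].
  by rewrite (negbTE h1).
split; last exact: (final hT (ltnSn _) hU).
move=> w hwX hw; split.
  by move=> e; split; [exact: utourX' | apply: caseI].
split.
  move=> e; have hU' := uprop_ext hU hwX hw e.
  exact: (final hT (ltnSn _) hU').
move=> e; split; [exact: utourX | exact: caseIII].
Qed.
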